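(* Let $k\ge6$ be an integer and $\alpha>\beta>0$. Then $$ (N'_{-1},N'_1)\subset(N_{-1},N_1)\subset(\delta_{-1},\delta_1). $$
   Context: Put $r=2k+\alpha+\beta+1$, $q=(\alpha-\beta)/r$, $s=(\alpha+\beta)/r$, and let $\omega,\tau,\tau'\in(0,\pi/2)$ be given by $\sin\omega=q$, $\sin\tau=s$, $\sin\tau'=\frac{\alpha+\beta+1}{2k+\alpha+\beta+1}$. For $j=\pm1$ let $\delta_j=j\cos(\tau+j\omega)$, $$N'_j=j\left(\cos(\tau'+j\omega)-\frac{3}{10}\left(\frac{\sin^4(\tau'+j\omega)}{2\cos\tau'\cos\omega}\right)^{1/3}r^{-2/3}\right),$$ $$N_j=j\left(\cos(\tau+j\omega)-\frac{5}{17}\left(\frac{\sin^4(\tau+j\omega)}{2\cos\tau\cos\omega}\right)^{1/3}r^{-2/3}\right).$$ *)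

(* Defs.v *)
From Stdlib Require Import Reals.
Open Scope R_scope.

(* Parameters: k : nat, a = alpha, b = beta. *)
Definition rr (k : nat) (a b : R) : R := 2 * INR k + a + b + 1.
Definition qq (k : nat) (a b : R) : R := (a - b) / rr k a b.
Definition ss (k : nat) (a b : R) : R := (a + b) / rr k a b.
Definition omega (k : nat) (a b : R) : R := asin (qq k a b).
Definition tau (k : nat) (a b : R) : R := asin (ss k a b).
Definition tau' (k : nat) (a b : R) : R :=
  asin ((a + b + 1) / (2 * INR k + a + b + 1)).

Definition cbrt (x : R) : R := if Rle_dec x 0 then 0 else Rpower x (1/3).

(* j ranges over {-1, 1}, encoded as a real *)
Definition delta (k : nat) (a b j : R) : R :=
  j * cos (tau k a b + j * omega k a b).

Definition NN' (k : nat) (a b j : R) : R :=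
  let t := tau' k a b in let w := omega k a b in
  j * (cos (t + j * w)
       - 3 / 10 * cbrt (sin (t + j * w) ^ 4 / (2 * cos t * cos w))
         * Rpower (rr k a b) (- (2 / 3))).

Definition NN (k : nat) (a b j : R) : R :=
  let t := tau k a b in let w := omega k a b in
  j * (cos (t + j * w)
       - 5 / 17 * cbrt (sin (t + j * w) ^ 4 / (2 * cos t * cos w))
         * Rpower (rr k a b) (- (2 / 3))).

(* Main.v *)
Require Import Defs.
From Stdlib Require Import Reals Lra Psatz.
Open Scope R_scope.

Lemma Rpower_pos' x y : 0 < Rpower x y.
Proof. unfold Rpower; apply exp_pos. Qed.

Lemma cbrt_nonneg x : 0 <= cbrt x.
Proof. unfold cbrt; destruct (Rle_dec x 0); [lra|]. left; apply Rpower_pos'. Qed.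

Lemma cbrt_mono x y : x <= y -> cbrt x <= cbrt y.
Proof.
  intros H. unfold cbrt at 1. destruct (Rle_dec x 0).
  - apply cbrt_nonneg.
  - unfold cbrt; destruct (Rle_dec y 0); [lra|].
    apply Rle_Rpower_l; lra.
Qed.

Lemma cbrt_scale c x y : 0 < c -> 0 < x -> y <= c ^ 3 * x -> cbrt y <= c * cbrt x.
Proof.
  intros Hc Hx Hy. unfold cbrt at 1. destruct (Rle_dec y 0).
  - assert (0 <= cbrt x) by apply cbrt_nonneg. nra.
  - unfold cbrt; destruct (Rle_dec x 0); [lra|].
    apply Rle_trans with (Rpower (c^3 * x) (1/3)).
    + apply Rle_Rpower_l; lra.
    + rewrite <- Rpower_mult_distr by (try apply pow_lt; lra).
      replace 3%nat with (Z.to_nat 3) by reflexivity.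
      rewrite <- (Rpower_pow (Z.to_nat 3) c Hc), Rpower_mult.
      replace (INR (Z.to_nat 3) * (1/3)) with 1 by (simpl; field).
      rewrite Rpower_1 by lra. lra.
Qed.

Lemma key_poly Cc Cp : 0 < Cp -> Cp <= Cc -> 13 * Cp^2 >= 12 * Cc^2 ->
  16 * Cc^3 * Cp <= (51/50)^3 * (Cc + Cp)^4.
Proof.
  intros H1 H2 H3.
  assert (Hk : Cp >= 96/100 * Cc) by nra.
  set (d := Cp - 96/100 * Cc).
  assert (Hd : 0 <= d) by (unfold d; lra).
  assert (PS : 0 < Cc) by lra.
  replace Cp with (96/100 * Cc + d) by (unfold d; ring).
  assert (0 <= Cc^3 * d) by (apply Rmult_le_pos; [apply pow_le|]; lra).
  assert (0 <= Cc^2 * d^2) by (apply Rmult_le_pos; apply pow_le; lra).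
  assert (0 <= Cc * d^3) by (apply Rmult_le_pos; [|apply pow_le]; lra).
  assert (0 <= d^4) by (apply pow_le; lra).
  assert (0 < Cc^4) by (apply pow_lt; lra).
  nra.
Qed.

Lemma hard_side s q s' Cc Cp Q R0 :
  0 < q -> q < s -> s < s' -> s' < 1 -> 0 < R0 ->
  Cc = sqrt (1 - s^2) -> Cp = sqrt (1 - s'^2) -> Q = sqrt (1 - q^2) ->
  13 * (1 - s'^2) >= 12 * (1 - s^2) ->
  Cp * Q - s' * q - 3/10 * cbrt ((s' * Q + Cp * q) ^ 4 / (2 * Cp * Q)) * R0
  <= Cc * Q - s * q - 5/17 * cbrt ((s * Q + Cc * q) ^ 4 / (2 * Cc * Q)) * R0.
Proof.
  intros Hq Hqs Hss Hs1 HR HS HCp HQ H13.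
  assert (ES : Cc^2 = 1 - s^2) by (rewrite HS; apply pow2_sqrt; nra).
  assert (ECp : Cp^2 = 1 - s'^2) by (rewrite HCp; apply pow2_sqrt; nra).
  assert (EQ : Q^2 = 1 - q^2) by (rewrite HQ; apply pow2_sqrt; nra).
  assert (PS : 0 < Cc) by (rewrite HS; apply sqrt_lt_R0; nra).
  assert (PCp : 0 < Cp) by (rewrite HCp; apply sqrt_lt_R0; nra).
  assert (PQ : 0 < Q) by (rewrite HQ; apply sqrt_lt_R0; nra).
  assert (LS : Cp <= Cc) by nra.
  assert (qSsQ : q * Cc <= s * Q).
  { assert (Hsq : (q*Cc)^2 <= (s*Q)^2) by (rewrite !Rpow_mult_distr, ES, EQ; nra).
    destruct (Rle_dec (q*Cc) (s*Q)) as [|Hn]; [assumption|].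
    assert (0 <= s * Q) by nra. nra. }
  set (U := s * Q + Cc * q). set (U' := s' * Q + Cp * q).
  assert (HU : 0 <= U) by (unfold U; nra).
  assert (HUU : U * (Cc + Cp) <= 2 * Cc * U').
  { unfold U, U'.
    assert (0 <= (Cc - Cp) * (s * Q - q * Cc)) by (apply Rmult_le_pos; lra).
    assert (0 <= 2 * Cc * (s' - s) * Q) by (apply Rmult_le_pos; [apply Rmult_le_pos|]; lra).
    nra. }
  assert (H4 : (U * (Cc + Cp))^4 <= (2 * Cc * U')^4).
  { apply pow_incr; split; nra. }
  assert (Hk := key_poly Cc Cp PCp LS ltac:(nra)).
  assert (HP : U ^ 4 * Cp <= (51/50)^3 * (U'^4 * Cc)).
  { assert (HSS : 0 < (Cc + Cp)^4) by (apply pow_lt; lra).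
    apply Rmult_le_reg_r with ((Cc + Cp)^4); [exact HSS|].
    assert (0 <= U^4) by (apply pow_le; lra).
    assert (0 <= U'^4) by (apply pow_le; unfold U'; nra).
    rewrite Rpow_mult_distr in H4.
    replace ((2 * Cc * U') ^ 4) with (16 * Cc^4 * U'^4) in H4 by ring.
    apply Rle_trans with (16 * Cc^4 * U'^4 * Cp).
    { replace (U ^ 4 * Cp * (Cc + Cp) ^ 4) with ((U ^ 4 * (Cc + Cp) ^ 4) * Cp) by ring.
      apply Rmult_le_compat_r; lra. }
    replace (16 * Cc ^ 4 * U' ^ 4 * Cp) with ((Cc * U'^4) * (16 * Cc^3 * Cp)) by ring.
    replace ((51 / 50) ^ 3 * (U' ^ 4 * Cc) * (Cc + Cp) ^ 4) with ((Cc * U'^4) * ((51 / 50) ^ 3 * (Cc + Cp) ^ 4)) by ring.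
    apply Rmult_le_compat_l; [apply Rmult_le_pos; lra | exact Hk]. }
  assert (HU' : 0 < U') by (unfold U'; assert (0 < s' * Q) by (apply Rmult_lt_0_compat; lra); assert (0 <= Cp * q) by (apply Rmult_le_pos; lra); lra).
  clearbody U U'.
  assert (HA : cbrt (U ^ 4 / (2 * Cc * Q)) <= 51/50 * cbrt (U' ^ 4 / (2 * Cp * Q))).
  { apply cbrt_scale; [lra| |].
    - apply Rdiv_lt_0_compat; [apply pow_lt; lra| repeat apply Rmult_lt_0_compat; lra].
    - apply Rmult_le_reg_r with (2 * Cc * Q * (2 * Cp * Q)); [repeat apply Rmult_lt_0_compat; lra|].
      replace (U ^ 4 / (2 * Cc * Q) * (2 * Cc * Q * (2 * Cp * Q))) with (U^4 * Cp * (2 * Q))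
        by (field; repeat split; lra).
      replace ((51 / 50) ^ 3 * (U' ^ 4 / (2 * Cp * Q)) * (2 * Cc * Q * (2 * Cp * Q)))
        with ((51/50)^3 * (U'^4 * Cc) * (2 * Q)) by (field; repeat split; lra).
      apply Rmult_le_compat_r; [repeat apply Rmult_le_pos; lra | lra]. }
  assert (0 <= cbrt (U' ^ 4 / (2 * Cp * Q))) by apply cbrt_nonneg.
  assert (Hc : Cp * Q - s' * q <= Cc * Q - s * q) by nra.
  nra.
Qed.

Lemma easy_side s q s' Cc Cp Q R0 :
  0 < q -> q < s -> s < s' -> s' < 1 -> 0 < R0 ->
  Cc = sqrt (1 - s^2) -> Cp = sqrt (1 - s'^2) -> Q = sqrt (1 - q^2) ->
  Cp * Q + s' * q - 3/10 * cbrt ((s' * Q - Cp * q) ^ 4 / (2 * Cp * Q)) * R0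
  <= Cc * Q + s * q - 5/17 * cbrt ((s * Q - Cc * q) ^ 4 / (2 * Cc * Q)) * R0.
Proof.
  intros Hq Hqs Hss Hs1 HR HS HCp HQ.
  assert (ES : Cc^2 = 1 - s^2) by (rewrite HS; apply pow2_sqrt; nra).
  assert (ECp : Cp^2 = 1 - s'^2) by (rewrite HCp; apply pow2_sqrt; nra).
  assert (EQ : Q^2 = 1 - q^2) by (rewrite HQ; apply pow2_sqrt; nra).
  assert (PS : 0 < Cc) by (rewrite HS; apply sqrt_lt_R0; nra).
  assert (PCp : 0 < Cp) by (rewrite HCp; apply sqrt_lt_R0; nra).
  assert (PQ : 0 < Q) by (rewrite HQ; apply sqrt_lt_R0; nra).
  assert (LS : Cp <= Cc) by nra.
  assert (qSsQ : q * Cc <= s * Q).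
  { assert (Hsq : (q*Cc)^2 <= (s*Q)^2) by (rewrite !Rpow_mult_distr, ES, EQ; nra).
    destruct (Rle_dec (q*Cc) (s*Q)) as [|Hn]; [assumption|].
    assert (0 <= s * Q) by nra. nra. }
  assert (qSsQ' : q * Cp <= s' * Q).
  { assert (Hsq : (q*Cp)^2 <= (s'*Q)^2) by (rewrite !Rpow_mult_distr, ECp, EQ; nra).
    destruct (Rle_dec (q*Cp) (s'*Q)) as [|Hn]; [assumption|].
    assert (0 <= s' * Q) by nra. nra. }
  assert (Hc : Cp * Q + s' * q <= Cc * Q + s * q).
  { assert (E1 : (Cc - Cp) * (Cc + Cp) = (s' - s) * (s' + s)) by nra.
    assert (H2 : q * (Cc + Cp) <= Q * (s' + s)) by nra.
    assert (H3 : q * (s' - s) * (Cc + Cp) <= Q * (Cc - Cp) * (Cc + Cp)).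
    { rewrite (Rmult_assoc Q), E1.
      replace (q * ((s' - s) * (s' + s))) with ((s' - s) * (q * (s' + s))) by ring.
      nra. }
    assert (q * (s' - s) <= Q * (Cc - Cp)).
    { apply Rmult_le_reg_r with (Cc + Cp); lra. }
    lra. }
  assert (HB : cbrt ((s * Q - Cc * q) ^ 4 / (2 * Cc * Q)) <= cbrt ((s' * Q - Cp * q) ^ 4 / (2 * Cp * Q))).
  { apply cbrt_mono.
    assert (0 <= s * Q - Cc * q) by lra.
    assert (s * Q - Cc * q <= s' * Q - Cp * q) by nra.
    assert (H4 : (s * Q - Cc * q) ^ 4 <= (s' * Q - Cp * q) ^ 4) by (apply pow_incr; lra).
    unfold Rdiv. apply Rmult_le_compat; [apply pow_le; lra | left; apply Rinv_0_lt_compat; nra | exact H4 |].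
    apply Rinv_le_contravar; nra. }
  assert (0 <= cbrt ((s * Q - Cc * q) ^ 4 / (2 * Cc * Q))) by apply cbrt_nonneg.
  nra.
Qed.

Theorem lemma10 (k : nat) (a b : R) :
  (6 <= k)%nat -> a > b -> b > 0 ->
  (forall x, NN' k a b (-1) < x < NN' k a b 1 -> NN k a b (-1) < x < NN k a b 1) /\
  (forall x, NN k a b (-1) < x < NN k a b 1 -> delta k a b (-1) < x < delta k a b 1).
Proof.
  intros Hk Hab Hb.
  assert (HK : 6 <= INR k) by (replace 6 with (INR 6) by (simpl; ring); apply le_INR; exact Hk).
  set (r := rr k a b).
  assert (Hr : r = 2 * INR k + a + b + 1) by reflexivity.
  assert (Pr : 0 < r) by lra.
  set (ri := / r).
  assert (Hri : r * ri = 1) by (unfold ri; field; lra).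
  assert (Pri : 0 < ri) by (unfold ri; apply Rinv_0_lt_compat; lra).
  set (s := ss k a b). set (q := qq k a b).
  set (s' := (a + b + 1) / (2 * INR k + a + b + 1)).
  assert (Es : s = (a + b) * ri) by reflexivity.
  assert (Eq : q = (a - b) * ri) by reflexivity.
  assert (Es' : s' = (a + b + 1) * ri) by reflexivity.
  assert (H0q : 0 < q) by (rewrite Eq; apply Rmult_lt_0_compat; lra).
  assert (Hqs : q < s) by (rewrite Eq, Es; apply Rmult_lt_compat_r; lra).
  assert (Hss : s < s') by (rewrite Es', Es; apply Rmult_lt_compat_r; lra).
  assert (Hs1 : s' < 1) by (rewrite Hr in Hri; rewrite Es'; nra).
  assert (H13 : 13 * (1 - s'^2) >= 12 * (1 - s^2)).
  { assert (E1 : 1 - s' = 2 * INR k * ri) by (rewrite Hr in Hri; rewrite Es'; nra).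
    assert (E2 : s' - s = ri) by (rewrite Es', Es; ring).
    assert (1 - s' >= 12 * ri) by (rewrite E1; nra).
    assert (0 < s) by lra.
    assert (Ei : s = s' - ri) by lra.
    assert (E : 13 * (1 - s'^2) - 12 * (1 - s^2) = (1 - s') * (1 + s + 13 * ri) - 12 * ri * (1 + s))
      by (rewrite Ei; ring).
    assert ((1 - s') * (1 + s + 13 * ri) >= 12 * ri * (1 + s + 13 * ri))
      by (apply Rmult_ge_compat_r; lra).
    assert (0 <= ri * ri) by nra.
    lra. }
  set (R0 := Rpower r (- (2 / 3))).
  assert (PR0 : 0 < R0) by apply Rpower_pos'.
  set (t := tau k a b). set (t' := tau' k a b). set (w := omega k a b).
  assert (st : sin t = s) by (apply sin_asin; lra).
  assert (st' : sin t' = s') by (apply sin_asin; lra).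
  assert (sw : sin w = q) by (apply sin_asin; lra).
  assert (ct : cos t = sqrt (1 - s^2)) by (unfold t, tau; fold s; rewrite cos_asin, Rsqr_pow2 by lra; reflexivity).
  assert (ct' : cos t' = sqrt (1 - s'^2)) by (unfold t', tau'; fold s'; rewrite cos_asin, Rsqr_pow2 by lra; reflexivity).
  assert (cw : cos w = sqrt (1 - q^2)) by (unfold w, omega; fold q; rewrite cos_asin, Rsqr_pow2 by lra; reflexivity).
  assert (HH := hard_side s q s' (cos t) (cos t') (cos w) R0 H0q Hqs Hss Hs1 PR0 ct ct' cw H13).
  assert (HE := easy_side s q s' (cos t) (cos t') (cos w) R0 H0q Hqs Hss Hs1 PR0 ct ct' cw).
  assert (C1 := cbrt_nonneg (sin (t + 1 * w) ^ 4 / (2 * cos t * cos w))).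
  assert (C2 := cbrt_nonneg (sin (t + -1 * w) ^ 4 / (2 * cos t * cos w))).
  unfold NN', NN, delta; fold r; fold R0; fold t; fold t'; fold w; cbv zeta.
  replace (t + 1 * w) with (t + w) in * by ring.
  replace (t' + 1 * w) with (t' + w) by ring.
  replace (t + -1 * w) with (t - w) in * by ring.
  replace (t' + -1 * w) with (t' - w) by ring.
  rewrite !cos_plus, !sin_plus, !cos_minus, !sin_minus in *.
  rewrite st, st', sw in *.
  assert (0 < 5/17 * cbrt ((s * cos w - cos t * q) ^ 4 / (2 * cos t * cos w)) * R0 \/
          0 = 5/17 * cbrt ((s * cos w - cos t * q) ^ 4 / (2 * cos t * cos w)) * R0) by nra.
  assert (0 <= 5/17 * cbrt ((s * cos w + cos t * q) ^ 4 / (2 * cos t * cos w)) * R0) by nra.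
  split; intros x Hx; split; lra.
Qed.
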